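(* Without the moment bound constraint $\int\|\mathbf{x}\|_2^d\,\mathrm{d}\mu\le M$, an optimization problem of option-pricing type over probability measures need not attain its optimal value. Specifically, for real numbers $0 \le k_1 < k_2$ and $a > 0$, the problem \[ p^\ast = \inf\Big\{\int_0^\infty \max(0,x-k_1)\,\mathrm{d}\mu(x) \;:\; \mu \text{ a Borel probability measure on } [0,\infty),\ \int_0^\infty \max(0,x-k_2)\,\mathrm{d}\mu(x) = a\Big\} \] is feasible, but there is no feasible probability measure $\mu$ attaining the infimum $p^\ast$. *)

(* Defs.v *)
From HB Require Import structures.
From mathcomp Require Import all_boot all_order all_algebra.
From mathcomp Require Import all_classical all_reals all_analysis.
Set Implicit Arguments. Unset Strict Implicit. Unset Printing Implicit Defensive.
Import Order.TTheory GRing.Theory Num.Theory.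
Local Open Scope classical_set_scope.
Local Open Scope ring_scope.

Definition payoff (R : realType) (k x : R) : R := Num.max 0 (x - k).

(* Borel probability measures on [0, oo) are represented as Borel probability
   measures on R giving full mass to [0, oo). *)
Definition supported_nonneg (R : realType) (mu : probability R R) : Prop :=
  mu `[0%R, +oo[%classic = 1%E.

Definition feasible (R : realType) (k2 a : R) (mu : probability R R) : Prop :=
  supported_nonneg mu /\
  (\int[mu]_(x in `[0%R, +oo[%classic) (payoff k2 x)%:E = a%:E)%E.

Definition objective (R : realType) (k1 : R) (mu : probability R R) : \bar R :=
  (\int[mu]_(x in `[0%R, +oo[%classic) (payoff k1 x)%:E)%E.

Definition opt_value (R : realType) (k1 k2 a : R) : \bar R :=
  ereal_inf [set v | exists mu : probability R R, feasible k2 a mu /\ v = objective k1 mu].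

(* Main.v *)
Require Import Defs.
From HB Require Import structures.
From mathcomp Require Import all_boot all_order all_algebra.
From mathcomp Require Import all_classical all_reals all_analysis.
From mathcomp Require Import measurable_realfun.
From mathcomp Require Import ring lra.
Import Order.TTheory GRing.Theory Num.Theory.
Local Open Scope ring_scope.
Local Open Scope classical_set_scope.

Section mix.
Context (R : realType) (p q : {nonneg R}) (x y : R) (hpq : p%:num + q%:num = 1).

Definition mix : set R -> \bar R := let _ := hpq in measure_add (mscale p (@dirac _ R x R)) (mscale q (@dirac _ R y R)).

HB.instance Definition _ := Measure.copy mix (measure_add (mscale p (@dirac _ R x R)) (mscale q (@dirac _ R y R))).

Let mix_setT : mix [set: R] = 1%E.
Proof.
rewrite /mix measure_addE /=.
rewrite [X in (_ + X)%E]/mscale [X in (X + _)%E]/mscale /=.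
rewrite !diracT.
rewrite !mule1 -EFinD hpq //.
Qed.

HB.instance Definition _ := Measure_isProbability.Build _ _ _ mix mix_setT.
End mix.

Lemma mixE (R : realType) (p q : {nonneg R}) (x y : R) (hpq : p%:num + q%:num = 1) A :
  @mix R p q x y hpq A = ((p%:num)%:E * \d_x A + (q%:num)%:E * \d_y A)%E.
Proof. by rewrite /mix /= measure_addE. Qed.

Lemma payoff_mf (R : realType) (k : R) (D : set R) :
  measurable_fun D (fun x => (payoff k x)%:E).
Proof.
apply/measurable_EFinP; apply: measurable_funTS.
rewrite /payoff. apply: (measurable_maxr (f:=cst 0) (g:=fun x : R => x - k)).
  exact: measurable_cst.
apply: measurable_funB => //; exact: measurable_cst.
Qed.

Definition D0 (R : realType) : set R := `[0%R, +oo[%classic.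

Lemma mD0 (R : realType) : measurable (D0 R).
Proof. exact: measurable_itv. Qed.
#[local] Hint Resolve mD0 : core.

Lemma mix_int (R : realType) (p q : {nonneg R}) (x y : R) (hpq : p%:num + q%:num = 1)
  (f : R -> \bar R) : measurable_fun (D0 R) f -> (forall z, D0 R z -> (0 <= f z)%E) ->
  D0 R x -> D0 R y ->
  (\int[@mix R p q x y hpq]_(z in D0 R) f z = (p%:num)%:E * f x + (q%:num)%:E * f y)%E.
Proof.
move=> mf f0 Dx Dy.
rewrite /mix /= ge0_integral_measure_add //; last exact: mD0.
rewrite !ge0_integral_mscale //; try exact: mD0.
rewrite !integral_dirac //; try exact: mD0.
rewrite !diracE !mem_set // !mul1e //.
Qed.

Section nu.
Context (R : realType) (k1 k2 a t : R) (k10 : 0 <= k1) (k12 : k1 < k2) (a0 : 0 < a)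
  (t0 : 0 < t) (t1 : t <= 1).

Let ht : 0 <= t. Proof. exact: ltW. Qed.
Let ht' : 0 <= 1 - t. Proof. by rewrite subr_ge0. Qed.
Let hpq : (NngNum ht)%:num + (NngNum ht')%:num = 1.
Proof. rewrite /=; lra. Qed.

Definition nu : probability R R := @mix R (NngNum ht) (NngNum ht') (k2 + a / t) 0 hpq.

Let Dx : D0 R (k2 + a / t).
Proof. rewrite /D0 /= in_itv /= andbT addr_ge0 //; [exact: le_trans k10 (ltW k12) | exact: divr_ge0 (ltW a0) ht]. Qed.
Let Dy : D0 R 0.
Proof. by rewrite /D0 /= in_itv /= lexx. Qed.

Lemma payoff0 (k : R) : 0 <= k -> payoff k 0 = 0.
Proof. move=> k0; rewrite /payoff; apply/max_idPl; lra. Qed.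

Lemma payoff_ge0 (k z : R) : 0 <= payoff k z.
Proof. by rewrite /payoff le_max lexx. Qed.

Lemma nu_int (k : R) : 0 <= k -> k <= k2 ->
  (\int[nu]_(z in `[0%R, +oo[%classic) (payoff k z)%:E = (t * (k2 + a / t - k))%:E)%E.
Proof.
move=> k0 kk2.
rewrite /nu /=.
rewrite (@mix_int R _ _ _ _ hpq (fun z => (payoff k z)%:E)) //; last 2 first.
- exact: payoff_mf.
- by move=> z _; rewrite lee_fin payoff_ge0.
rewrite payoff0 // mule0 adde0 /= /payoff; congr (_%:E); congr (_ * _).
apply/max_idPr.
have : 0 < a / t by exact: divr_gt0.
move: (a / t) => s ?; lra.
Qed.

Lemma nu_feasible : feasible k2 a nu.
Proof.
split.
  rewrite /supported_nonneg /nu /= mixE.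
  rewrite !diracE !mem_set // !mule1 -EFinD /=; congr (_%:E); lra.
rewrite nu_int //; last exact: le_trans k10 (ltW k12).
congr (_%:E); field; exact: lt0r_neq0.
Qed.

Lemma nu_obj : objective k1 nu = (a + t * (k2 - k1))%:E.
Proof.
rewrite /objective nu_int //; last exact: ltW.
congr (_%:E); field; exact: lt0r_neq0.
Qed.
End nu.


Section main.
Context (R : realType) (k1 k2 a : R) (k10 : 0 <= k1) (k12 : k1 < k2) (a0 : 0 < a)
  (mu : probability R R) (fmu : feasible k2 a mu).

Let S : set R := `]k2, +oo[%classic.
Let mS : measurable S. Proof. exact: measurable_itv. Qed.
#[local] Hint Resolve mS : core.
Let mfS : measurable_fun (D0 R) (fun x => (\1_S x : R)%:E).
Proof. apply/measurable_EFinP; apply: measurable_funTS. exact: measurable_indic. Qed.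

Lemma m_neq0 : mu (S `&` D0 R) != 0%E.
Proof.
apply/eqP => m0.
have [_ h] := fmu.
have : (\int[mu]_(x in D0 R `&` S) (payoff k2 x)%:E = 0)%E.
  apply: null_set_integral.
  - exact: measurableI (mD0 R) mS.
  - exact: payoff_mf.
  - by rewrite setIC.
rewrite integral_mkcondr.
rewrite (_ : (fun x => (payoff k2 x)%:E) \_ S = (fun x => (payoff k2 x)%:E)); last first.
  apply/funext => x; rewrite patchE; case: ifPn => // /negP xS.
  suff -> : payoff k2 x = 0 by [].
  rewrite /payoff; apply/max_idPl.
  have : ~ (k2 < x). by move=> hx; apply: xS; rewrite inE /S /= in_itv /= hx.
  move/negP; rewrite -leNgt => ?; lra.
have -> : (\int[mu]_(x in D0 R) (payoff k2 x)%:E = a%:E)%E by exact: h.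
by move=> /(congr1 fine) /= a00; move: a0; rewrite a00 ltxx.
Qed.

Lemma lower : (a%:E + (k2 - k1)%:E * mu (S `&` D0 R) <= objective k1 mu)%E.
Proof.
have [_ h] := fmu.
rewrite /objective -h -integral_indic //.
rewrite -ge0_integralZl //; try exact: mD0; last by rewrite lee_fin subr_ge0 ltW.
rewrite -ge0_integralD //; try exact: mD0; try exact: payoff_mf; try exact: (measurable_funeM _ mfS);
  try by move=> x _; rewrite ?mule_ge0 // lee_fin ?payoff_ge0 ?indic_ge0 // subr_ge0 ltW.
apply: ge0_le_integral => //; try exact: mD0; try exact: payoff_mf;
  try by move=> x _; rewrite adde_ge0 // ?mule_ge0 // lee_fin ?payoff_ge0 ?indic_ge0 // subr_ge0 ltW.
- apply: emeasurable_funD; first exact: payoff_mf.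
  exact: measurable_funeM.
- move=> x _; rewrite /payoff; case: (boolP (x \in S)) => xS.
    rewrite indicE xS.
    move: xS; rewrite inE /S /= in_itv /= andbT => xk2.
    rewrite -EFinM -EFinD lee_fin mulr1.
    have -> : Num.max 0 (x - k2) = x - k2 by apply/max_idPr; rewrite subr_ge0 ltW.
    have -> : Num.max 0 (x - k1) = x - k1.
      by apply/max_idPr; rewrite subr_ge0 (le_trans (ltW k12) (ltW xk2)).
    by rewrite addrA subrK.
  rewrite indicE (negbTE xS) mule0 adde0 lee_fin.
  by rewrite ge_max !le_max lexx /= lerD2l lerN2 (ltW k12) orbT.
- exact: measurable_itv.
Qed.
End main.

Theorem proposition1 (R : realType) (k1 k2 a : R) :
  0 <= k1 -> k1 < k2 -> 0 < a ->
  (exists mu : probability R R, feasible k2 a mu) /\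
  ~ (exists mu : probability R R,
        feasible k2 a mu /\ objective k1 mu = opt_value k1 k2 a).
Proof.
move=> k10 k12 a0.
split.
  exists (@nu R k2 a 1 ltr01 (lexx 1)); exact: (@nu_feasible R k1 k2 a _ k10 k12 a0).
move=> [mu [fmu hopt]].
have m0 := @m_neq0 R k2 a a0 mu fmu.
have lb := @lower R k1 k2 a k12 mu fmu.
have mle1 : (mu (`]k2, +oo[ `&` D0 R) <= 1)%E.
  apply: probability_le1; apply: measurableI; [exact: measurable_itv | exact: mD0].
have mge0 : (0 <= mu (`]k2, +oo[ `&` D0 R))%E := measure_ge0 _ _.
move: m0 lb mle1 mge0; case: (mu _) => [s| |] //= s0 lb s1 s0'.
rewrite lee_fin in s1; rewrite lee_fin in s0'.
have sp : 0 < s by rewrite lt0r s0 s0'.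
have t0 : 0 < s / 2 by exact: divr_gt0.
have t1 : s / 2 <= 1.
  apply: le_trans s1; rewrite ler_pdivrMr // ler_peMr //; exact: ler1n.
have ub : (opt_value k1 k2 a <= objective k1 (@nu R k2 a (s / 2) t0 t1))%E.
  apply: ereal_inf_lbound; exists (@nu R k2 a (s / 2) t0 t1); split => //; exact: (@nu_feasible R k1 k2 a _ k10 k12 a0).
rewrite (@nu_obj R k1 k2 a _ k10 k12 a0) -hopt in ub.
have := le_trans lb ub; rewrite -EFinM -EFinD lee_fin.
rewrite lerD2l mulrC ler_pM2r ?subr_gt0 //.
move: sp; clear; move: s => s sp.
rewrite ler_pdivlMr // => h; nra.
Qed.
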